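(* Let $\mathcal T_{\mathbf q}={\mathbb K}_{\mathbf q}[T_1^{\pm1},\ldots,T_n^{\pm1}]$ be a simple quantum torus and let $R=\mathcal T_{\mathbf q}[X_1,\ldots,X_m]$ be the commutative polynomial ring over $\mathcal T_{\mathbf q}$ in $m$ central variables. Then: (a) $\operatorname{Z}(R)={\mathbb K}[X_1,\ldots,X_m]$; (b) $\operatorname{Der}(R)=\operatorname{InnDer}(R)\oplus\bigoplus_{i=1}^n\operatorname{Z}(R)D_i\oplus\bigoplus_{j=1}^m\operatorname{Z}(R)\partial_j$, where $D_i,\partial_j$ are the derivations of $R$ defined by $D_i(T_k)=\delta_{ik}T_k$, $D_i(X_k)=0$, $\partial_j(T_k)=0$, $\partial_j(X_k)=\delta_{jk}$.
   Context: ${\mathbb K}$ is a field of characteristic $0$. For a multiplicatively skew-symmetric matrix $\mathbf q=(q_{ij})\in M_n({\mathbb K}^* )$ (i.e. $q_{ii}=1$, $q_{ij}=q_{ji}^{-1}$), the quantum torus ${\mathbb K}_{\mathbf q}[T_1^{\pm1},\ldots,T_n^{\pm1}]$ is the ${\mathbb K}$-algebra generated by $T_1^{\pm1},\ldots,T_n^{\pm1}$ with relations $T_iT_i^{-1}=T_i^{-1}T_i=1$ and $T_jT_i=q_{ij}T_iT_j$. It is simple iff its center is ${\mathbb K}$. $\operatorname{Z}$, $\operatorname{Der}$, $\operatorname{InnDer}$ denote center, ${\mathbb K}$-derivations and inner derivations. *)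

(* Defs.v *)
From HB Require Import structures.
From mathcomp Require Import all_boot all_order all_algebra.
Set Implicit Arguments. Unset Strict Implicit. Unset Printing Implicit Defensive.
Import GRing.Theory.
Local Open Scope ring_scope.

Definition zpow {R : pzRingType} (t ti : R) (z : int) : R :=
  match z with Posz k => t ^+ k | Negz k => ti ^+ k.+1 end.

Definition tmono {R : pzRingType} {n : nat} (T Ti : 'I_n -> R)
  (a : {ffun 'I_n -> int}) : R := \prod_(i < n) zpow (T i) (Ti i) (a i).

Definition xmono {R : pzRingType} {m : nat} (X : 'I_m -> R)
  (b : {ffun 'I_m -> nat}) : R := \prod_(j < m) X j ^+ b j.

Definition txmono {R : pzRingType} {n m : nat} (T Ti : 'I_n -> R) (X : 'I_m -> R)
  (p : {ffun 'I_n -> int} * {ffun 'I_m -> nat}) : R :=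
  tmono T Ti p.1 * xmono X p.2.

Definition in_span {K : fieldType} {R : lmodType K} {I : eqType} (f : I -> R)
  (r : R) : Prop :=
  exists (s : seq I) (c : I -> K), r = \sum_(i <- s) c i *: f i.

Definition lin_indep {K : fieldType} {R : lmodType K} {I : eqType} (f : I -> R)
  : Prop :=
  forall (s : seq I) (c : I -> K), uniq s -> \sum_(i <- s) c i *: f i = 0 ->
    forall i, i \in s -> c i = 0.

Definition qtorus_poly {K : fieldType} {R : algType K} {n m : nat}
  (q : 'I_n -> 'I_n -> K) (T Ti : 'I_n -> R) (X : 'I_m -> R) : Prop :=
  ((forall i, q i i = 1) /\ (forall i j, q i j * q j i = 1)) /\
  (forall i, T i * Ti i = 1 /\ Ti i * T i = 1) /\
  (forall i j, T j * T i = q i j *: (T i * T j)) /\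
  (forall j r, X j * r = r * X j) /\
  (forall r, in_span (txmono T Ti X) r) /\
  lin_indep (txmono T Ti X).

(* The subring S (given as a predicate containing 0,1, closed under ring ops)
   is a simple ring: nonzero, and its only two-sided ideals are 0 and S. *)
Definition simple_sub {R : pzRingType} (S : R -> Prop) : Prop :=
  (exists x, S x /\ x <> 0) /\
  forall I : R -> Prop,
    (forall x, I x -> S x) -> I 0 ->
    (forall x y, I x -> I y -> I (x - y)) ->
    (forall a x, S a -> I x -> I (a * x) /\ I (x * a)) ->
    (forall x, I x -> x = 0) \/ (forall x, S x -> I x).

Definition central {R : pzRingType} (r : R) : Prop := forall y, r * y = y * r.

Definition is_derivation {K : fieldType} {R : algType K} (d : R -> R) : Prop :=
  (forall (k : K) x y, d (k *: x + y) = k *: d x + d y) /\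
  (forall x y, d (x * y) = d x * y + x * d y).

Definition is_Dfamily {K : fieldType} {R : algType K} {n m : nat}
  (T : 'I_n -> R) (X : 'I_m -> R) (D : 'I_n -> R -> R) : Prop :=
  forall i, is_derivation (D i) /\
    (forall k, D i (T k) = if i == k then T k else 0) /\
    (forall k, D i (X k) = 0).

Definition is_Pfamily {K : fieldType} {R : algType K} {n m : nat}
  (T : 'I_n -> R) (X : 'I_m -> R) (P : 'I_m -> R -> R) : Prop :=
  forall j, is_derivation (P j) /\
    (forall k, P j (T k) = 0) /\
    (forall k, P j (X k) = if j == k then 1 else 0).

(* Main.v *)
From Stdlib Require Import IndefiniteDescription.
Require Import Defs.
From HB Require Import structures.
From mathcomp Require Import all_boot all_order all_algebra.
From mathcomp Require Import zify ring.
Set Implicit Arguments. Unset Strict Implicit. Unset Printing Implicit Defensive.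
Import Order.TTheory GRing.Theory Num.Theory.
Local Open Scope ring_scope.

Lemma sum_pred1 (I : eqType) (W : nmodType) (u : seq I) (F : I -> W) p :
  uniq u -> \sum_(j <- u | j == p) F j = if p \in u then F p else 0.
Proof.
move=> Uu; case: ifP => pu.
  rewrite -big_filter.
  have -> : [seq j <- u | j == p] = [:: p].
    by rewrite -(filter_pred1_uniq Uu pu); apply: eq_filter => j.
  by rewrite big_seq1.
rewrite big1_seq // => j /andP[/eqP -> ju]; by rewrite ju in pu.
Qed.

Lemma subUl (T : eqType) (a b : seq T) : {subset a <= undup (a ++ b)}.
Proof. by move=> x xa; rewrite mem_undup mem_cat xa. Qed.
Lemma subUr (T : eqType) (a b : seq T) : {subset b <= undup (a ++ b)}.
Proof. by move=> x xa; rewrite mem_undup mem_cat xa orbT. Qed.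

Section Basis.
Variables (K : fieldType) (V : lmodType K) (I : eqType) (f : I -> V).

Lemma agg (s u : seq I) (c : I -> K) : uniq u -> {subset s <= u} ->
  \sum_(i <- s) c i *: f i = \sum_(j <- u) (\sum_(i <- s | i == j) c i) *: f j.
Proof.
move=> Uu su.
rewrite [RHS](eq_bigr (fun j => \sum_(i <- s | i == j) c i *: f j)); last first.
  by move=> j _; rewrite scaler_suml.
rewrite (exchange_big_dep xpredT) //=.
apply: eq_big_seq => i iS.
have E : \sum_(j <- u | j == i) c i *: f j = (if i \in u then c i *: f i else 0) := sum_pred1 _ _ Uu.
rewrite (su i iS) in E; rewrite (eq_bigl (fun j => j == i)) ?E // => j; exact: eq_sym.
Qed.

Lemma span0 : in_span f 0.
Proof. by exists [::], (fun _ => 0); rewrite big_nil. Qed.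
Lemma spanD x y : in_span f x -> in_span f y -> in_span f (x + y).
Proof.
move=> [s [c ->]] [s' [c' ->]].
set u := undup (s ++ s').
exists u, (fun j => \sum_(i <- s | i == j) c i + \sum_(i <- s' | i == j) c' i).
rewrite (@agg s u c (undup_uniq _) (@subUl _ s s')) (@agg s' u c' (undup_uniq _) (@subUr _ s s')).
by rewrite -big_split; apply: eq_bigr => j _; rewrite scalerDl.
Qed.
Lemma spanZ k x : in_span f x -> in_span f (k *: x).
Proof.
move=> [s [c ->]]; exists s, (fun i => k * c i).
by rewrite scaler_sumr; apply: eq_bigr => i _; rewrite scalerA.
Qed.
Lemma spanB x y : in_span f x -> in_span f y -> in_span f (x - y).
Proof. by move=> Hx Hy; apply: spanD => //; rewrite -scaleN1r; apply: spanZ. Qed.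
Lemma span_f p : in_span f (f p).
Proof. by exists [:: p], (fun _ => 1); rewrite big_seq1 scale1r. Qed.
Lemma span_sum (J : Type) (s : seq J) (F : J -> V) :
  (forall j, in_span f (F j)) -> in_span f (\sum_(j <- s) F j).
Proof.
move=> H; elim: s => [|a s IH]; first by rewrite big_nil; apply: span0.
by rewrite big_cons; apply: spanD.
Qed.

Hypothesis span : forall r, in_span f r.
Hypothesis indep : lin_indep f.

Definition rs r : seq I := projT1 (constructive_indefinite_description _ (span r)).
Lemma rsP r : exists c, r = \sum_(i <- rs r) c i *: f i.
Proof. exact: (projT2 (constructive_indefinite_description _ (span r))). Qed.
Definition rc r : I -> K := projT1 (constructive_indefinite_description _ (rsP r)).
Lemma rcE r : r = \sum_(i <- rs r) rc r i *: f i.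
Proof. exact: (projT2 (constructive_indefinite_description _ (rsP r))). Qed.

Definition kcoef p r : K := \sum_(i <- rs r | i == p) rc r i.

Lemma kc_out p r : p \notin rs r -> kcoef p r = 0.
Proof.
move=> pr; rewrite /kcoef big1_seq // => j /andP[/eqP -> ju]; by rewrite ju in pr.
Qed.

Lemma expand r u : uniq u -> {subset rs r <= u} -> r = \sum_(j <- u) kcoef j r *: f j.
Proof. by move=> Uu su; rewrite {1}(rcE r) (agg _ Uu su). Qed.

Lemma kc_uniq u d p : uniq u ->
  kcoef p (\sum_(j <- u) d j *: f j) = if p \in u then d p else 0.
Proof.
move=> Uu; set r := \sum_(j <- u) _.
set w := undup (rs r ++ u).
have Uw : uniq w by exact: undup_uniq.
have E1 := expand (r:=r) Uw (@subUl _ _ _).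
have E2 : r = \sum_(j <- w) (if j \in u then d j else 0) *: f j.
  rewrite /r (agg _ Uw); last by move=> j ju; rewrite mem_undup mem_cat ju orbT.
  by apply: eq_bigr => j _; rewrite sum_pred1.
have H0 : \sum_(j <- w) (kcoef j r - (if j \in u then d j else 0)) *: f j = 0.
  under eq_bigr do rewrite scalerBl.
  by rewrite sumrB -E1 -E2 subrr.
have := indep Uw H0 => Hi.
case pw: (p \in w).
  by apply/eqP; rewrite -subr_eq0; apply/eqP; apply: Hi.
move/negbT: pw; rewrite mem_undup mem_cat negb_or => /andP[pr pu].
by rewrite kc_out // (negbTE pu).
Qed.

Lemma kc0 p : kcoef p 0 = 0.
Proof. by have := kc_uniq (fun _ => 0) p (isT : uniq (@nil I)); rewrite big_nil. Qed.

Lemma kc_lin k x y p : kcoef p (k *: x + y) = k * kcoef p x + kcoef p y.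
Proof.
set u := undup (rs x ++ rs y).
have Uu : uniq u by exact: undup_uniq.
have ex := expand (r:=x) Uu (@subUl _ _ _).
have ey := expand (r:=y) Uu (@subUr _ _ _).
have -> : k *: x + y = \sum_(j <- u) (k * kcoef j x + kcoef j y) *: f j.
  rewrite {1}ex {1}ey scaler_sumr -big_split /=.
  by apply: eq_bigr => j _; rewrite scalerDl scalerA.
rewrite kc_uniq //; case: ifP => // pu.
move: pu; rewrite mem_undup mem_cat => /negbT; rewrite negb_or => /andP[px py].
by rewrite !kc_out // mulr0 addr0.
Qed.

Lemma kcD p x y : kcoef p (x + y) = kcoef p x + kcoef p y.
Proof. by have := kc_lin 1 x y p; rewrite scale1r mul1r. Qed.
Lemma kcZ p k x : kcoef p (k *: x) = k * kcoef p x.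
Proof. by have := kc_lin k x 0 p; rewrite !addr0 kc0 addr0. Qed.
Lemma kcN p x : kcoef p (- x) = - kcoef p x.
Proof. by rewrite -scaleN1r kcZ mulN1r. Qed.
Lemma kcB p x y : kcoef p (x - y) = kcoef p x - kcoef p y.
Proof. by rewrite kcD kcN. Qed.
Lemma kc_sum (J : Type) (s : seq J) (F : J -> V) p :
  kcoef p (\sum_(j <- s) F j) = \sum_(j <- s) kcoef p (F j).
Proof.
elim: s => [|a s IH]; first by rewrite !big_nil kc0.
by rewrite !big_cons kcD IH.
Qed.

Lemma kc_f p q : kcoef p (f q) = if p == q then 1 else 0.
Proof.
have := kc_uniq (fun _ => 1) p (isT : uniq [:: q]).
by rewrite big_seq1 scale1r inE.
Qed.

Lemma kc_ext x y : (forall p, kcoef p x = kcoef p y) -> x = y.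
Proof.
move=> H; set u := undup (rs x ++ rs y).
have Uu : uniq u by exact: undup_uniq.
rewrite (expand (r:=x) Uu (@subUl _ _ _)).
rewrite (expand (r:=y) Uu (@subUr _ _ _)).
by apply: eq_bigr => j _; rewrite H.
Qed.

Section Op.
Variables (W : lmodType K) (g : I -> W).
Definition op (x : V) : W := \sum_(j <- undup (rs x)) kcoef j x *: g j.

Lemma op_expand x u : uniq u -> {subset rs x <= u} ->
  op x = \sum_(j <- u) kcoef j x *: g j.
Proof.
move=> Uu su.
have -> : \sum_(j <- u) kcoef j x *: g j = \sum_(j <- u | j \in rs x) kcoef j x *: g j.
  rewrite [RHS]big_mkcond /=; apply: eq_bigr => j _; case: ifP => // /negbT jx.
  by rewrite kc_out // scale0r.
rewrite -big_filter /op; apply: perm_big.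
apply: uniq_perm; [exact: undup_uniq| exact: filter_uniq|].
move=> j; rewrite mem_undup mem_filter.
by case jx: (j \in rs x) => //=; rewrite su.
Qed.

Lemma op_lin k x y : op (k *: x + y) = k *: op x + op y.
Proof.
set u := undup (rs x ++ rs y ++ rs (k *: x + y)).
have Uu : uniq u by exact: undup_uniq.
rewrite (op_expand (x:=x) Uu); last by move=> j jr; rewrite mem_undup mem_cat jr.
rewrite (op_expand (x:=y) Uu); last by move=> j jr; rewrite mem_undup !mem_cat jr orbT.
rewrite (op_expand (x:=k *: x + y) Uu); last by move=> j jr; rewrite mem_undup !mem_cat jr !orbT.
rewrite scaler_sumr -big_split /=; apply: eq_bigr => j _.
by rewrite kc_lin scalerDl scalerA.
Qed.

Lemma op_f q : op (f q) = g q.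
Proof.
set u := undup (rs (f q) ++ [:: q]).
have Uu : uniq u by exact: undup_uniq.
rewrite (op_expand Uu); last by move=> j jr; rewrite mem_undup mem_cat jr.
rewrite (eq_bigr (fun j => if j == q then g j else 0)); last first.
  by move=> j _; rewrite kc_f; case: eqP => _; rewrite ?scale1r ?scale0r.
by rewrite -big_mkcond /= sum_pred1 // mem_undup mem_cat inE eqxx orbT.
Qed.
End Op.
End Basis.


Section AlgBasis.
Variables (K : fieldType) (R : algType K) (I : eqType) (f : I -> R).
Hypothesis span : forall r, in_span f r.

Section Lin.
Variable d : R -> R.
Hypothesis dL : forall k x y, d (k *: x + y) = k *: d x + d y.
Lemma dlin0 : d 0 = 0.
Proof.
have := dL 1 0 0; rewrite !scale1r addr0 => H.
by have := congr1 (fun z => z - d 0) H; rewrite addrK subrr.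
Qed.
Lemma dlinD x y : d (x + y) = d x + d y.
Proof. by have := dL 1 x y; rewrite !scale1r. Qed.
Lemma dlinZ k x : d (k *: x) = k *: d x.
Proof. by have := dL k x 0; rewrite !addr0 dlin0 addr0. Qed.
Lemma dlinN x : d (- x) = - d x.
Proof. by rewrite -scaleN1r dlinZ scaleN1r. Qed.
Lemma dlinB x y : d (x - y) = d x - d y.
Proof. by rewrite dlinD dlinN. Qed.
Lemma dlin_sum (J : Type) (s : seq J) (F : J -> R) :
  d (\sum_(j <- s) F j) = \sum_(j <- s) d (F j).
Proof.
elim: s => [|a s IH]; first by rewrite !big_nil dlin0.
by rewrite !big_cons dlinD IH.
Qed.

Definition Lb x y := d (x * y) - (d x * y + x * d y).

Lemma Lb_r x y1 y2 k : Lb x y1 = 0 -> Lb x y2 = 0 -> Lb x (k *: y1 + y2) = 0.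
Proof.
rewrite /Lb => /eqP; rewrite subr_eq0 => /eqP H1 /eqP; rewrite subr_eq0 => /eqP H2.
have -> : x * (k *: y1 + y2) = k *: (x * y1) + x * y2 by rewrite mulrDr scalerAr.
rewrite dL H1 H2 dL; apply/eqP; rewrite subr_eq0; apply/eqP.
by rewrite !mulrDr -!scalerAr scalerDr addrACA.
Qed.
Lemma Lb_l y x1 x2 k : Lb x1 y = 0 -> Lb x2 y = 0 -> Lb (k *: x1 + x2) y = 0.
Proof.
rewrite /Lb => /eqP; rewrite subr_eq0 => /eqP H1 /eqP; rewrite subr_eq0 => /eqP H2.
have -> : (k *: x1 + x2) * y = k *: (x1 * y) + x2 * y by rewrite mulrDl scalerAl.
rewrite dL H1 H2 dL; apply/eqP; rewrite subr_eq0; apply/eqP.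
by rewrite !mulrDl -!scalerAl scalerDr addrACA.
Qed.
Lemma Lb_0r x : Lb x 0 = 0.
Proof. by rewrite /Lb !(mulr0, mul0r, dlin0, addr0, subrr). Qed.
Lemma Lb_0l x : Lb 0 x = 0.
Proof. by rewrite /Lb !(mulr0, mul0r, dlin0, addr0, subrr). Qed.

Lemma Lb_sum_r x (s : seq I) (c : I -> K) :
  (forall q, Lb x (f q) = 0) -> Lb x (\sum_(j <- s) c j *: f j) = 0.
Proof.
move=> H; elim: s => [|a s IH]; first by rewrite big_nil Lb_0r.
by rewrite big_cons Lb_r.
Qed.
Lemma Lb_sum_l y (s : seq I) (c : I -> K) :
  (forall q, Lb (f q) y = 0) -> Lb (\sum_(j <- s) c j *: f j) y = 0.
Proof.
move=> H; elim: s => [|a s IH]; first by rewrite big_nil Lb_0l.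
by rewrite big_cons Lb_l.
Qed.

Lemma der_basis :
  (forall p q, d (f p * f q) = d (f p) * f q + f p * d (f q)) -> is_derivation d.
Proof.
move=> Hf; split; first exact: dL.
move=> x y; apply/eqP; rewrite -subr_eq0; apply/eqP; rewrite -/(Lb x y).
have [sx [cx ->]] := span x.
apply: Lb_sum_l => p.
have [sy [cy ->]] := span y.
apply: Lb_sum_r => q.
by rewrite /Lb Hf subrr.
Qed.
End Lin.
End AlgBasis.

Section DerGen.
Variables (K : fieldType) (R : algType K).

Lemma der_ext (d d' : R -> R) : (forall x, d x = d' x) -> is_derivation d -> is_derivation d'.
Proof.
move=> E [L M]; split => [k x y|x y]; rewrite -!E; [exact: L| exact: M].
Qed.

Lemma der_ad (r : R) : is_derivation (fun x => r * x - x * r).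
Proof.
split => [k x y|x y].
  rewrite mulrDr mulrDl -scalerAr -scalerAl scalerBr opprD addrACA.
  by [].
by rewrite mulrBl mulrBr !mulrA addrA subrK.
Qed.

Lemma der_zmul (z : R) (d : R -> R) : central z -> is_derivation d ->
  is_derivation (fun x => z * d x).
Proof.
move=> zc [L M]; split => [k x y|x y].
  by rewrite L mulrDr scalerAr.
by rewrite M mulrDr mulrA; congr (_ + _); rewrite !mulrA zc.
Qed.

Lemma der_add (d1 d2 : R -> R) : is_derivation d1 -> is_derivation d2 ->
  is_derivation (fun x => d1 x + d2 x).
Proof.
move=> [L1 M1] [L2 M2]; split => [k x y|x y].
  by rewrite L1 L2 scalerDr addrACA.
by rewrite M1 M2 mulrDl mulrDr addrACA.
Qed.

Lemma der_opp (d : R -> R) : is_derivation d -> is_derivation (fun x => - d x).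
Proof.
move=> [L M]; split => [k x y|x y].
  by rewrite L opprD scalerN.
by rewrite M opprD mulNr mulrN.
Qed.

Lemma der_zero : is_derivation (fun _ : R => 0).
Proof. by split => [k x y|x y]; rewrite ?scaler0 ?mulr0 ?mul0r ?addr0. Qed.

Lemma der_sum (J : Type) (s : seq J) (F : J -> R -> R) :
  (forall j, is_derivation (F j)) -> is_derivation (fun x => \sum_(j <- s) F j x).
Proof.
move=> H; elim: s => [|a s IH].
  by apply: der_ext der_zero => x; rewrite big_nil.
by apply: der_ext (der_add (H a) IH) => x; rewrite big_cons.
Qed.

Lemma central_sum (J : Type) (s : seq J) (F : J -> R) :
  (forall j, central (F j)) -> central (\sum_(j <- s) F j).
Proof.
move=> H y; rewrite mulr_suml mulr_sumr; apply: eq_bigr => j _; exact: H.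
Qed.
Lemma central_scale k (x : R) : central x -> central (k *: x).
Proof. by move=> H y; rewrite -scalerAl H scalerAr. Qed.
Lemma central0 : central (0 : R).
Proof. by move=> y; rewrite mul0r mulr0. Qed.
Lemma central_mul (x y : R) : central x -> central y -> central (x * y).
Proof. by move=> Hx Hy z; rewrite -mulrA Hy mulrA Hx mulrA. Qed.

Lemma der_one (d : R -> R) : is_derivation d -> d 1 = 0.
Proof.
move=> [_ M]; have := M 1 1; rewrite !mulr1 mul1r => H.
by have := congr1 (fun v => v - d 1) H; rewrite subrr addrK.
Qed.
End DerGen.


Lemma ffD (T : finType) (V : nmodType) (a b : {ffun T -> V}) i : (a + b) i = a i + b i.
Proof. by rewrite ffunE. Qed.
Lemma ff0 (T : finType) (V : nmodType) i : (0 : {ffun T -> V}) i = 0.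
Proof. by rewrite ffunE. Qed.

Section Zpow.
Variables (R : pzRingType) (t ti : R).
Hypotheses (H1 : t * ti = 1) (H2 : ti * t = 1).

Definition zp (z : int) : nat := match z with Posz k => k | Negz _ => 0%N end.
Definition zn (z : int) : nat := match z with Posz _ => 0%N | Negz l => l.+1 end.

Lemma zpowE z : zpow t ti z = t ^+ zp z * ti ^+ zn z.
Proof. by case: z => k /=; rewrite ?expr0 ?mulr1 ?mul1r. Qed.

Lemma zpow_sub k l : zpow t ti (k%:Z - l%:Z) = t ^+ k * ti ^+ l.
Proof.
elim: k l => [|k IH] [|l].
- by rewrite subr0 /= !expr0 mulr1.
- by rewrite sub0r -NegzE /= expr0 mul1r.
- by rewrite subr0 /= expr0 mulr1.
have -> : (k.+1)%:Z - (l.+1)%:Z = k%:Z - l%:Z by lia.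
by rewrite IH exprSr exprS mulrA -(mulrA _ t) H1 mulr1.
Qed.

Lemma zpD z w : zpow t ti (z + w) = zpow t ti z * zpow t ti w.
Proof.
have E z' : z' = (zp z')%:Z - (zn z')%:Z by case: z' => k; rewrite /= ?subr0 ?NegzE ?sub0r.
have -> : z + w = (zp z + zp w)%:Z - (zn z + zn w)%:Z.
  by rewrite {1}(E z) {1}(E w) !PoszD addrACA opprD.
rewrite zpow_sub !zpowE !exprD.
have C : GRing.comm t ti by rewrite /GRing.comm H1 H2.
have C2 : GRing.comm (ti ^+ zn z) (t ^+ zp w).
  by apply: commrX; apply: commr_sym; apply: commrX.
by rewrite -!mulrA; congr (_ * _); rewrite !mulrA C2.
Qed.

Lemma zp0 : zpow t ti 0 = 1. Proof. by []. Qed.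
Lemma zp1 : zpow t ti 1 = t. Proof. by rewrite /= expr1. Qed.
End Zpow.

Section QC.
Variables (K : fieldType) (R : algType K).
Definition qc (x y : R) := exists k : K, k != 0 /\ x * y = k *: (y * x).

Lemma qc_sym x y : qc x y -> qc y x.
Proof.
move=> [k [k0 E]]; exists k^-1; split; first by rewrite invr_neq0.
by rewrite E scalerA mulVf // scale1r.
Qed.
Lemma qc_1r x : qc x 1.
Proof. by exists 1; split; rewrite ?oner_neq0 // mulr1 mul1r scale1r. Qed.
Lemma qc_Mr x y z : qc x y -> qc x z -> qc x (y * z).
Proof.
move=> [k [k0 E]] [l [l0 F]]; exists (k * l); split; first by rewrite mulf_neq0.
rewrite mulrA E -scalerAl -(mulrA y x z) F scalerAr scalerA.
by rewrite -scalerAr mulrA.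
Qed.
Lemma qc_Xr x y k : qc x y -> qc x (y ^+ k).
Proof.
move=> H; elim: k => [|k IH]; first by rewrite expr0; apply: qc_1r.
by rewrite exprS; apply: qc_Mr.
Qed.
Lemma qc_invr x y y' : y * y' = 1 -> y' * y = 1 -> qc x y -> qc x y'.
Proof.
move=> E1 E2 [k [k0 E]]; exists k^-1; split; first by rewrite invr_neq0.
have : y' * x = k *: (x * y').
  by rewrite -[y' * x]mulr1 -E1 mulrA -(mulrA y') E scalerAr scalerAl mulrA E2 mul1r.
by move=> ->; rewrite scalerA mulVf // scale1r.
Qed.
Lemma qc_prodr (J : Type) x (s : seq J) (F : J -> R) :
  (forall j, qc x (F j)) -> qc x (\prod_(j <- s) F j).
Proof.
move=> H; elim: s => [|a s IH]; first by rewrite big_nil; apply: qc_1r.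
by rewrite big_cons; apply: qc_Mr.
Qed.
Lemma qc_zpowr x t ti z : t * ti = 1 -> ti * t = 1 -> qc x t -> qc x (zpow t ti z).
Proof.
move=> E1 E2 H; rewrite zpowE; apply: qc_Mr; apply: qc_Xr => //.
exact: (qc_invr E1 E2).
Qed.
End QC.


Section Main.
Variables (K : fieldType) (R : algType K) (n m : nat) (q : 'I_n -> 'I_n -> K)
  (T Ti : 'I_n -> R) (X : 'I_m -> R).
Hypothesis HQ : qtorus_poly q T Ti X.

Lemma qnz i j : q i j != 0.
Proof.
case: HQ => [[_ H] _]; apply/eqP => E; have := H i j.
by rewrite E mul0r => /eqP; rewrite eq_sym oner_eq0.
Qed.
Lemma TTi i : T i * Ti i = 1. Proof. by case: HQ => _ [H _]; case: (H i). Qed.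
Lemma TiT i : Ti i * T i = 1. Proof. by case: HQ => _ [H _]; case: (H i). Qed.
Lemma Trel i j : T j * T i = q i j *: (T i * T j). Proof. by case: HQ => _ [_ [H _]]. Qed.
Lemma Xc j r : X j * r = r * X j. Proof. by case: HQ => _ [_ [_ [H _]]]. Qed.
Lemma spanR r : in_span (txmono T Ti X) r. Proof. by case: HQ => _ [_ [_ [_ [H _]]]]. Qed.
Lemma indepR : lin_indep (txmono T Ti X). Proof. by case: HQ => _ [_ [_ [_ [_ H]]]]. Qed.

Local Notation A := {ffun 'I_n -> int}.
Local Notation B := {ffun 'I_m -> nat}.
Local Notation mono := (txmono T Ti X).
Local Notation tm := (tmono T Ti).
Local Notation xm := (xmono X).
Local Notation Z i := (zpow (T i) (Ti i)).

Lemma qcTT i j : qc (T j) (T i).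
Proof. by exists (q i j); rewrite qnz Trel. Qed.
Lemma qcTz j i z : qc (T j) (Z i z).
Proof. by apply: qc_zpowr; [exact: TTi|exact: TiT|exact: qcTT]. Qed.
Lemma qcZZ i j z w : qc (Z j z) (Z i w).
Proof.
apply: qc_sym; apply: qc_zpowr; [exact: TTi|exact: TiT|].
exact: qc_sym (qcTz j i w).
Qed.
Lemma qcT_tm k a : qc (T k) (tm a).
Proof. by apply: qc_prodr => i; apply: qcTz. Qed.

Lemma tprod (s : seq 'I_n) (a a' : 'I_n -> int) : exists c, c != 0 /\
  (\prod_(i <- s) Z i (a i)) * (\prod_(i <- s) Z i (a' i)) =
  c *: \prod_(i <- s) Z i (a i + a' i).
Proof.
elim: s => [|x s [c [c0 IH]]].
  by exists 1; rewrite oner_neq0 !big_nil mulr1 scale1r.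
have [k [k0 E]] : qc (\prod_(i <- s) Z i (a i)) (Z x (a' x)).
  by apply: qc_sym; apply: qc_prodr => i; apply: qcZZ.
exists (k * c); split; first by rewrite mulf_neq0.
rewrite !big_cons -mulrA (mulrA (\prod_(i <- s) _)) E -scalerAl -scalerAr.
rewrite -(mulrA (Z x (a' x))) IH -scalerAr -scalerAr mulrA scalerA.
by rewrite -(zpD (TTi x) (TiT x)).
Qed.

Lemma tmM a a' : exists c, c != 0 /\ tm a * tm a' = c *: tm (a + a').
Proof.
have [c [c0 E]] := tprod (index_enum 'I_n) a a'.
exists c; split => //; rewrite /tmono E; congr (_ *: _).
by apply: eq_bigr => i _; rewrite ffD.
Qed.

Lemma xcent (s : seq 'I_m) (b : 'I_m -> nat) r :
  (\prod_(j <- s) X j ^+ b j) * r = r * \prod_(j <- s) X j ^+ b j.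
Proof.
elim: s r => [|x s IH] r; first by rewrite big_nil mul1r mulr1.
have C : GRing.comm r (X x ^+ b x) by apply: commrX; rewrite /GRing.comm Xc.
by rewrite big_cons -mulrA IH mulrA -C -mulrA.
Qed.
Lemma xm_c b r : xm b * r = r * xm b. Proof. exact: xcent. Qed.

Lemma xprod (s : seq 'I_m) (b b' : 'I_m -> nat) :
  (\prod_(j <- s) X j ^+ b j) * (\prod_(j <- s) X j ^+ b' j) =
  \prod_(j <- s) X j ^+ (b j + b' j).
Proof.
elim: s => [|x s IH]; first by rewrite !big_nil mulr1.
rewrite !big_cons -mulrA (mulrA (\prod_(i <- s) _)) xcent -!mulrA IH mulrA.
by rewrite -exprD.
Qed.
Lemma xmM b b' : xm b * xm b' = xm (b + b').
Proof. by rewrite /xmono xprod; apply: eq_bigr => j _; rewrite ffD. Qed.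

Lemma monoM a a' : exists c, c != 0 /\ forall b b',
  mono (a, b) * mono (a', b') = c *: mono (a + a', b + b').
Proof.
have [c [c0 E]] := tmM a a'.
exists c; split => // b b'; rewrite /txmono /=.
by rewrite -mulrA (mulrA (xm b)) (xm_c b (tm a')) -mulrA xmM mulrA E -scalerAl.
Qed.

Definition ea k : A := [ffun i => (i == k)%:Z].
Definition eb k : B := [ffun j => nat_of_bool (j == k)].

Lemma tm0 : tm 0 = 1.
Proof. by rewrite /tmono big1 // => i _; rewrite ff0. Qed.
Lemma xm0 : xm 0 = 1.
Proof. by rewrite /xmono big1 // => i _; rewrite ff0 expr0. Qed.
Lemma tm_e k : tm (ea k) = T k.
Proof.
rewrite /tmono (eq_bigr (fun i => if i == k then T k else 1)).
  by rewrite -big_mkcond big_pred1_eq.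
by move=> i _; rewrite ffunE; case: eqP => [->|]; rewrite ?zp1.
Qed.
Lemma xm_e k : xm (eb k) = X k.
Proof.
rewrite /xmono (eq_bigr (fun i => if i == k then X k else 1)).
  by rewrite -big_mkcond big_pred1_eq.
by move=> i _; rewrite ffunE; case: eqP => [->|]; rewrite ?expr1 ?expr0.
Qed.
Lemma T_mono k : T k = mono (ea k, 0). Proof. by rewrite /txmono /= tm_e xm0 mulr1. Qed.
Lemma X_mono k : X k = mono (0, eb k). Proof. by rewrite /txmono /= xm_e tm0 mul1r. Qed.
Lemma one_mono : 1 = mono (0, 0) :> R. Proof. by rewrite /txmono /= tm0 xm0 mulr1. Qed.


Local Notation I := (A * B)%type.
Definition cf (p : I) (x : R) : K := kcoef spanR p x.

Lemma cfD p x y : cf p (x + y) = cf p x + cf p y. Proof. rewrite /cf. exact: (kcD spanR indepR). Qed.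
Lemma cfZ p k x : cf p (k *: x) = k * cf p x. Proof. exact: (kcZ spanR indepR). Qed.
Lemma cfN p x : cf p (- x) = - cf p x. Proof. exact: (kcN spanR indepR). Qed.
Lemma cfB p x y : cf p (x - y) = cf p x - cf p y. Proof. exact: (kcB spanR indepR). Qed.
Lemma cf0 p : cf p 0 = 0. Proof. exact: (kc0 spanR indepR). Qed.
Lemma cf_sum (J : Type) (s : seq J) (F : J -> R) p :
  cf p (\sum_(j <- s) F j) = \sum_(j <- s) cf p (F j).
Proof. exact: (kc_sum spanR indepR). Qed.
Lemma cf_mono p p' : cf p (mono p') = if p == p' then 1 else 0.
Proof. exact: (kc_f spanR indepR). Qed.
Lemma cf_ext x y : (forall p, cf p x = cf p y) -> x = y.
Proof. exact: (@kc_ext _ _ _ _ spanR). Qed.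
Lemma cf_expand x : x = \sum_(j <- undup (rs spanR x)) cf j x *: mono j.
Proof. by apply: (@expand _ _ _ _ spanR) => //; [exact: undup_uniq | move=> j; rewrite mem_undup]. Qed.
Lemma cf_out p x : p \notin rs spanR x -> cf p x = 0.
Proof. exact: kc_out. Qed.

Lemma cf_map (phi : R -> R) (kap : I -> K) (tau : I -> I) :
  (forall c x y, phi (c *: x + y) = c *: phi x + phi y) -> injective tau ->
  (forall p, phi (mono p) = kap p *: mono (tau p)) ->
  forall p x, cf (tau p) (phi x) = kap p * cf p x.
Proof.
move=> L Itau H p x.
rewrite {1}(cf_expand x) (dlin_sum L) cf_sum.
rewrite (eq_bigr (fun j => if j == p then kap p * cf p x else 0)); last first.
  move=> j _; rewrite (dlinZ L) H !cfZ cf_mono (inj_eq Itau) eq_sym.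
  by case: eqP => [->|_]; rewrite ?mulr1 ?mulr0 // mulrC.
rewrite -big_mkcond /= sum_pred1 ?undup_uniq //; case: ifP => // /negbT.
by rewrite mem_undup => /cf_out ->; rewrite mulr0.
Qed.

Lemma cf_diag (phi : R -> R) (kap : I -> K) :
  (forall c x y, phi (c *: x + y) = c *: phi x + phi y) ->
  (forall p, phi (mono p) = kap p *: mono p) ->
  forall p x, cf p (phi x) = kap p * cf p x.
Proof. by move=> L H; apply: (cf_map (tau := id)) => //. Qed.

Lemma mono_inj p p' : mono p = mono p' -> p = p'.
Proof.
move=> E; have := cf_mono p p'; rewrite -E cf_mono eqxx.
by case: eqP => // _ /eqP; rewrite oner_eq0.
Qed.

Lemma one_neq0 : (1 : R) != 0.
Proof.
apply/eqP => E; have := cf_mono (0, 0) (0, 0).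
by rewrite -one_mono E cf0 eqxx => /eqP; rewrite eq_sym oner_eq0.
Qed.

Definition sg k (x : R) := T k * x * Ti k.
Definition lam k p := cf p (sg k (mono p)).

Lemma sg_lin k c x y : sg k (c *: x + y) = c *: sg k x + sg k y.
Proof. by rewrite /sg mulrDr mulrDl -scalerAr -scalerAl. Qed.

Lemma sg_mono_ex k p : exists kap, kap != 0 /\ T k * tm p.1 = kap *: (tm p.1 * T k)
  /\ sg k (mono p) = kap *: mono p.
Proof.
have [kap [k0 E]] := qcT_tm k p.1.
exists kap; do 2!split => //.
rewrite /sg /txmono mulrA E -scalerAl -!mulrA -scalerAl -!mulrA; congr (_ *: (_ * _)).
by rewrite mulrA -(xm_c p.2 (T k)) -mulrA TTi mulr1.
Qed.

Lemma sg_mono k p : sg k (mono p) = lam k p *: mono p.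
Proof.
have [kap [_ [_ E]]] := sg_mono_ex k p.
by rewrite /lam E cfZ cf_mono eqxx mulr1.
Qed.
Lemma T_tm_lam k p : T k * tm p.1 = lam k p *: (tm p.1 * T k).
Proof.
have [kap [_ [E1 E]]] := sg_mono_ex k p.
by rewrite /lam E cfZ cf_mono eqxx mulr1.
Qed.
Lemma lam_nz k p : lam k p != 0.
Proof.
have [kap [k0 [_ E]]] := sg_mono_ex k p.
by rewrite /lam E cfZ cf_mono eqxx mulr1.
Qed.
Lemma cf_sg k p x : cf p (sg k x) = lam k p * cf p x.
Proof. by apply: cf_diag; [exact: sg_lin | exact: sg_mono]. Qed.
Lemma lam0 k b : lam k (0, b) = 1.
Proof.
rewrite /lam /sg /txmono /= tm0 mul1r -xm_c -mulrA TTi mulr1.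
by rewrite -[xm b]mul1r -tm0 -[tm 0 * xm b]/(mono (0, b)) cf_mono eqxx.
Qed.

Lemma seq_max (U : eqType) (s : seq U) (g : U -> int) : s != [::] ->
  exists2 x, x \in s & forall y, y \in s -> g y <= g x.
Proof.
elim: s => // x s IH _.
case: s IH => [|x' s] IH.
  by exists x; rewrite ?inE // => y; rewrite inE => /eqP ->.
have [z zs zm] := IH isT.
have [h|h] := leP (g x) (g z).
  exists z; first by rewrite inE zs orbT.
  by move=> y; rewrite inE => /orP[/eqP ->|]; [exact: h| exact: zm].
exists x; first by rewrite inE eqxx.
move=> y; rewrite inE => /orP[/eqP -> //|ys].
by apply: le_trans (zm _ ys) (ltW h).
Qed.

Local Notation S := (in_span tm).

Lemma tm_mono a : tm a = mono (a, 0).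
Proof. by rewrite /txmono /= xm0 mulr1. Qed.

Lemma S_one : S 1. Proof. by rewrite -tm0; apply: span_f. Qed.
Lemma S_mul x y : S x -> S y -> S (x * y).
Proof.
move=> [s [c ->]] [s' [c' ->]].
rewrite mulr_suml; apply: span_sum => i; rewrite -scalerAl; apply: spanZ.
rewrite mulr_sumr; apply: span_sum => j; rewrite -scalerAr; apply: spanZ.
have [c0 [_ E]] := tmM i j; rewrite E; apply: spanZ; exact: span_f.
Qed.

Lemma cfS y p : S y -> p.2 != 0 -> cf p y = 0.
Proof.
move=> [s [c ->]] p2; rewrite cf_sum big1 // => i _.
by rewrite cfZ tm_mono cf_mono; case: eqP => [E|]; [rewrite E eqxx in p2| rewrite mulr0].
Qed.

Lemma comm_gen t : (forall k, T k * t = t * T k) -> forall b, GRing.comm t (tm b).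
Proof.
move=> Hc b.
have HTi k : Ti k * t = t * Ti k.
  by rewrite -[Ti k * t]mulr1 -(TTi k) !mulrA -(mulrA _ t) -Hc mulrA TiT mul1r.
apply: commr_prod => i _; rewrite zpowE; apply: commrM; apply: commrX.
  by rewrite /GRing.comm Hc.
by rewrite /GRing.comm HTi.
Qed.

Lemma comm_S t : (forall k, T k * t = t * T k) -> forall y, S y -> t * y = y * t.
Proof.
move=> Hc y [s [c ->]]; rewrite mulr_sumr mulr_suml; apply: eq_bigr => i _.
by rewrite -scalerAr -scalerAl (comm_gen Hc).
Qed.

Definition ell (a b : A) : int := \sum_i a i * b i.
Lemma ellD a b b' : ell a (b + b') = ell a b + ell a b'.
Proof. by rewrite /ell -big_split; apply: eq_bigr => i _; rewrite ffD mulrDr. Qed.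
Lemma ell0 a : ell a 0 = 0.
Proof. by rewrite /ell big1 // => i _; rewrite ff0 mulr0. Qed.
Lemma ell_pos a : a != 0 -> 0 < ell a a.
Proof.
move=> a0.
have [i ai] : exists i, a i != 0.
  apply/existsP; apply: contraR a0 => /existsPn H; apply/eqP/ffunP => i.
  by rewrite ff0; apply/eqP; move: (H i); rewrite negbK.
rewrite /ell (bigD1 i) //=.
have h1 : 0 < a i * a i by lia.
have h2 : 0 <= \sum_(j | j != i) a j * a j.
  by apply: sumr_ge0 => j _; nia.
by apply: (lt_le_trans h1); rewrite lerDl.
Qed.

Section Shift.
Variable a : A.
Definition tau (p : I) : I := (a + p.1, p.2).
Definition kap (p : I) : K := cf (tau p) (tm a * mono p).
Lemma shift_mono p : tm a * mono p = kap p *: mono (tau p) /\ kap p != 0.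
Proof.
have [c [c0 E]] := tmM a p.1.
have E2 : tm a * mono p = c *: mono (tau p).
  by rewrite /txmono mulrA E -scalerAl.
by rewrite /kap E2 cfZ cf_mono eqxx mulr1.
Qed.
Lemma tau_inj : injective tau.
Proof.
move=> [b c] [b' c'] /= [E1 ->]; congr (_, _).
by move: E1 => /addrI.
Qed.
Lemma cf_shift p x : cf (tau p) (tm a * x) = kap p * cf p x.
Proof.
apply: (cf_map (phi := fun x => tm a * x) (kap := kap) (tau := tau)).
- by move=> c x' y'; rewrite mulrDr -scalerAr.
- exact: tau_inj.
- by move=> p'; case: (shift_mono p').
Qed.
End Shift.

Lemma tm_central a : simple_sub S -> (forall k, T k * tm a = tm a * T k) -> a = 0.
Proof.
move=> [_ Hs] Hc.
set t := tm a.
have Ct := comm_S Hc.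
have St : S t by apply: span_f.
have St1 : S (t - 1) by apply: spanB => //; exact: S_one.
pose J x := exists y, S y /\ x = (t - 1) * y.
have := Hs J.
case.
- by move=> x [y [Sy ->]]; apply: S_mul.
- by exists 0; rewrite mulr0; split => //; apply: span0.
- move=> x y [x' [Sx ->]] [y' [Sy ->]]; exists (x' - y'); split.
    exact: spanB.
  by rewrite mulrBr.
- move=> b x Sb [y [Sy ->]]; split.
    exists (b * y); split; first exact: S_mul.
    rewrite mulrA mulrBr mulrBl mulr1 mul1r.
    by rewrite mulrBl mulrA (Ct b Sb).
  by exists (y * b); split; [exact: S_mul | rewrite mulrA].
- move=> H0; have := H0 (t - 1) (ex_intro _ 1 (conj S_one (esym (mulr1 _)))).
  move/eqP; rewrite subr_eq0 => /eqP; rewrite /t tm_mono one_mono.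
  by move/mono_inj => [].
move=> H1; have [y [Sy E]] := H1 1 S_one.
case: (eqVneq a 0) => // a0; exfalso.
have E1 : 1 = t * y - y by rewrite E mulrBl mul1r.
have Hrel p : cf (tau a p) 1 = kap a p * cf p y - cf (tau a p) y.
  by rewrite {1}E1 cfB cf_shift.
have cf1 p : cf p 1 = if p == (0, 0) then 1 else 0 by rewrite one_mono cf_mono.
set Y := [seq p <- undup (rs spanR y) | cf p y != 0].
have memY p : (p \in Y) = (cf p y != 0).
  rewrite mem_filter mem_undup; case: (boolP (p \in rs spanR y)) => pr.
    by rewrite andbT.
  by rewrite andbF (cf_out pr) eqxx.
have Yne : Y != [::].
  apply/eqP => Y0.
  have y0 : y = 0.
    apply: cf_ext => p; rewrite cf0; apply/eqP.
    by rewrite -[cf p y == 0]negbK -memY Y0 in_nil.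
  by move: E; rewrite y0 mulr0 => /eqP; rewrite (negbTE one_neq0).
have [pM pMY pMm] := seq_max (fun p => ell a p.1) Yne.
have [pm pmY pmm] := seq_max (fun p => - ell a p.1) Yne.
have la := ell_pos a0.
have ellN b : ell a (- b) = - ell a b.
  have := ellD a b (- b); rewrite subrr ell0 => /esym/eqP.
  by rewrite addrC addr_eq0 => /eqP.
have cM : cf (tau a pM) y = 0.
  apply/eqP; rewrite -[_ == 0]negbK -memY; apply/negP => /pMm /=.
  rewrite ellD; lia.
have H1M := Hrel pM; rewrite cM subr0 cf1 in H1M.
have eM : a + pM.1 = 0.
  move: H1M; case: eqP => [[-> _] //| _ /esym/eqP].
  move=> h; exfalso; move: h; apply/negP; apply: mulf_neq0.
    by case: (shift_mono a pM).
  by rewrite -memY.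
have ellM : ell a pM.1 = - ell a a.
  have := ellD a a pM.1; rewrite eM ell0 => /esym/eqP.
  by rewrite addrC addr_eq0 => /eqP.
set p0 : I := (pm.1 - a, pm.2).
have tp0 : tau a p0 = pm by rewrite /tau /p0 /= addrC subrK; case: (pm).
have cm : cf p0 y = 0.
  apply/eqP; rewrite -[_ == 0]negbK -memY; apply/negP => /pmm /=.
  rewrite /p0 /= ellD ellN; lia.
have H1m := Hrel p0; rewrite tp0 cm mulr0 sub0r cf1 in H1m.
have em : pm.1 = 0.
  move: H1m; case: eqP => [-> //| _ /eqP].
  by rewrite eq_sym oppr_eq0 => /eqP h; move: pmY; rewrite memY h eqxx.
have := pMm pm pmY; rewrite em ell0 ellM; lia.
Qed.

Lemma cf_uniq u (d : I -> K) p : uniq u ->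
  cf p (\sum_(j <- u) d j *: mono j) = if p \in u then d p else 0.
Proof. exact: (kc_uniq spanR indepR). Qed.

Lemma mono0_c b : central (mono (0, b)).
Proof. by move=> y; rewrite /txmono /= tm0 mul1r xm_c. Qed.

Section Simple.
Hypothesis Hs : simple_sub S.

Lemma central_cf r : central r -> forall p, cf p r != 0 -> p.1 = 0.
Proof.
move=> rc p cp; apply: tm_central => // k.
have E : sg k r = r by rewrite /sg -rc -mulrA TTi mulr1.
have : lam k p * cf p r = cf p r by rewrite -cf_sg E.
move=> /eqP; rewrite -subr_eq0 -{2}[cf p r]mul1r -mulrBl mulf_eq0 (negbTE cp) orbF.
rewrite subr_eq0 => /eqP l1.
by rewrite T_tm_lam l1 scale1r.
Qed.

Lemma central_span r : central r -> in_span xm r.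
Proof.
move=> rc; set u := undup (rs spanR r).
exists (map snd [seq p <- u | p.1 == 0]), (fun b => cf (0, b) r).
rewrite big_map big_filter {1}(cf_expand r) -/u [RHS]big_mkcond /=.
apply: eq_bigr => [[a b]] _ /=; case: eqP => [->|a0].
  by rewrite /txmono /= tm0 mul1r.
case: (eqVneq (cf (a, b) r) 0) => [->|cn]; first by rewrite scale0r.
by have := central_cf rc cn.
Qed.
End Simple.

Lemma span_central r : in_span xm r -> central r.
Proof.
move=> [s [c ->]]; apply: central_sum => i; apply: central_scale => y.
exact: xm_c.
Qed.

Definition dec j (b : B) : B := [ffun k => if k == j then (b k).-1 else b k].
Definition Dd i : R -> R := op spanR (fun p : I => ((p.1 i)%:~R : K) *: mono p).
Definition Pd j : R -> R :=
  op spanR (fun p : I => ((p.2 j)%:R : K) *: mono (p.1, dec j p.2)).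

Lemma Dd_lin i c x y : Dd i (c *: x + y) = c *: Dd i x + Dd i y.
Proof. exact: (op_lin spanR indepR). Qed.
Lemma Pd_lin j c x y : Pd j (c *: x + y) = c *: Pd j x + Pd j y.
Proof. exact: (op_lin spanR indepR). Qed.
Lemma Dd_mono i p : Dd i (mono p) = ((p.1 i)%:~R : K) *: mono p.
Proof. exact: (op_f spanR indepR). Qed.
Lemma Pd_mono j p : Pd j (mono p) = ((p.2 j)%:R : K) *: mono (p.1, dec j p.2).
Proof. exact: (op_f spanR indepR). Qed.

Lemma Dd_der i : is_derivation (Dd i).
Proof.
apply: (der_basis spanR); first exact: Dd_lin.
move=> [a b] [a' b']; have [c [_ E]] := monoM a a'.
rewrite E (dlinZ (Dd_lin i)) !Dd_mono /= -scalerAl -scalerAr E ffD intrD.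
by rewrite scalerDl scalerDr !scalerA mulrC [c * _]mulrC.
Qed.

Lemma decD j (b b' : B) : b j != 0%N -> dec j b + b' = dec j (b + b').
Proof.
move=> bj; apply/ffunP => k; rewrite !ffunE.
by case: eqP => // ->; case: (b j) bj.
Qed.

Lemma Pd_der j : is_derivation (Pd j).
Proof.
apply: (der_basis spanR); first exact: Pd_lin.
move=> [a b] [a' b']; have [c [_ E]] := monoM a a'.
rewrite E (dlinZ (Pd_lin j)) !Pd_mono /= -scalerAl -scalerAr !E ffD natrD.
have H1 : (b j)%:R *: mono (a + a', dec j b + b') = ((b j)%:R : K) *: mono (a + a', dec j (b + b')).
  by case: (eqVneq (b j) 0%N) => [->|bj]; rewrite ?scale0r // decD.
have H2 : (b' j)%:R *: mono (a + a', b + dec j b') = ((b' j)%:R : K) *: mono (a + a', dec j (b + b')).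
  case: (eqVneq (b' j) 0%N) => [->|bj]; rewrite ?scale0r // [b + dec j b']addrC decD //.
  by rewrite [b' + b]addrC.
by rewrite !(scalerA _ c) -!(mulrC c) -!scalerA H1 H2 -scalerDr -scalerDl.
Qed.

Lemma DP_family : is_Dfamily T X Dd /\ is_Pfamily T X Pd.
Proof.
split => i; (split; [exact: Dd_der || exact: Pd_der | split => k]).
- by rewrite T_mono Dd_mono /= ffunE; case: (i == k); rewrite /= ?scale1r ?scale0r.
- by rewrite X_mono Dd_mono /= ff0 scale0r.
- by rewrite T_mono Pd_mono /= ff0 scale0r.
- rewrite X_mono Pd_mono /= ffunE; case: ifP => h; last by rewrite scale0r.
  rewrite scale1r one_mono; move/eqP: h => <-; congr (mono (_, _)); apply/ffunP => k'.
  by rewrite !ffunE; case: (k' == i).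
Qed.

Lemma der_zero_gen d : is_derivation d -> (forall k, d (T k) = 0) ->
  (forall j, d (X j) = 0) -> forall x, d x = 0.
Proof.
move=> Hd dT dXj; have d1 := der_one Hd; case: Hd => L M.
have dM x y : d x = 0 -> d y = 0 -> d (x * y) = 0.
  by move=> hx hy; rewrite M hx hy mul0r mulr0 addr0.
have dTi k : d (Ti k) = 0.
  have := M (T k) (Ti k); rewrite TTi d1 dT mul0r add0r => /esym h.
  by rewrite -[d (Ti k)]mul1r -(TiT k) -mulrA h mulr0.
have dX x k : d x = 0 -> d (x ^+ k) = 0.
  by move=> hx; elim: k => [|k IH]; rewrite ?expr0 // exprS; apply: (dM).
have dP (J : Type) (s : seq J) (F : J -> R) :
    (forall j, d (F j) = 0) -> d (\prod_(j <- s) F j) = 0.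
  by move=> H; elim: s => [|a s IH]; rewrite ?big_nil // big_cons; apply: (dM).
have dmono p : d (mono p) = 0.
  apply: (dM).
    apply: (dP) => i; rewrite zpowE; apply: (dM); apply: (dX) => //.
  by apply: (dP) => i; apply: (dX).
move=> x; rewrite (cf_expand x) (dlin_sum L) big1 // => p _.
by rewrite (dlinZ L) dmono scaler0.
Qed.

Lemma Xd_central d j : is_derivation d -> central (d (X j)).
Proof.
move=> [L M] y.
have h := M (X j) y; rewrite (Xc j y) M (Xc j (d y)) addrC in h.
by move/addIr: h.
Qed.

Lemma combo_der (D : 'I_n -> R -> R) (P : 'I_m -> R -> R) r z w :
  is_Dfamily T X D -> is_Pfamily T X P ->
  (forall i, central (z i)) -> (forall j, central (w j)) ->
  is_derivation (fun x => (r * x - x * r) + \sum_(i < n) z i * D i x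
                                          + \sum_(j < m) w j * P j x).
Proof.
move=> HD HP zc wc.
apply: der_add; first apply: der_add; first exact: der_ad.
  by apply: der_sum => i; apply: der_zmul => //; case: (HD i).
by apply: der_sum => j; apply: der_zmul => //; case: (HP j).
Qed.

Lemma sum_delta (F : 'I_n -> R) k :
  \sum_(i < n) F i * (if i == k then T k else 0) = F k * T k.
Proof.
rewrite (eq_bigr (fun i => if i == k then F i * T k else 0)).
  by rewrite -big_mkcond big_pred1_eq.
by move=> i _; case: ifP; rewrite ?mulr0.
Qed.
Lemma sum_deltaX (F : 'I_m -> R) k :
  \sum_(j < m) F j * (if j == k then 1 else 0) = F k.
Proof.
rewrite (eq_bigr (fun j => if j == k then F j else 0)).
  by rewrite -big_mkcond big_pred1_eq.
by move=> i _; case: ifP; rewrite ?mulr0 ?mulr1.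
Qed.

Lemma comm_all r : (forall k, T k * r = r * T k) -> forall x, r * x = x * r.
Proof.
move=> H x; rewrite (cf_expand x) mulr_sumr mulr_suml; apply: eq_bigr => [[a b]] _.
rewrite -scalerAr -scalerAl; congr (_ *: _).
rewrite /txmono /= mulrA (comm_gen H a) -!mulrA; congr (_ * _).
by rewrite xm_c.
Qed.

Section Decomp.
Hypothesis Hs : simple_sub S.
Variables (D : 'I_n -> R -> R) (P : 'I_m -> R -> R).
Hypotheses (HD : is_Dfamily T X D) (HP : is_Pfamily T X P).

Local Notation combo r z w := (fun x => (r * x - x * r) + \sum_(i < n) z i * D i x
                                          + \sum_(j < m) w j * P j x).

Lemma sumD_T (z : 'I_n -> R) k : \sum_(i < n) z i * D i (T k) = z k * T k.
Proof.
rewrite -(sum_delta z k); apply: eq_bigr => i _; congr (_ * _).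
by case: (HD i) => _ [-> _].
Qed.
Lemma sumP_T (w : 'I_m -> R) k : \sum_(j < m) w j * P j (T k) = 0.
Proof. by rewrite big1 // => j _; case: (HP j) => _ [-> _]; rewrite mulr0. Qed.
Lemma sumD_X (z : 'I_n -> R) k : \sum_(i < n) z i * D i (X k) = 0.
Proof. by rewrite big1 // => i _; case: (HD i) => _ [_ ->]; rewrite mulr0. Qed.
Lemma sumP_X (w : 'I_m -> R) k : \sum_(j < m) w j * P j (X k) = w k.
Proof.
rewrite -(sum_deltaX w k); apply: eq_bigr => j _; congr (_ * _).
by case: (HP j) => _ [_ ->].
Qed.

Lemma decomp d : is_derivation d -> exists (r : R) (z : 'I_n -> R) (w : 'I_m -> R),
  (forall i, central (z i)) /\ (forall j, central (w j)) /\
  forall x, d x = (r * x - x * r) + \sum_(i < n) z i * D i x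
                                  + \sum_(j < m) w j * P j x.
Proof.
move=> Hd; case: (Hd) => L M.
pose w j := d (X j).
pose u k := d (T k) * Ti k.
have dT k : d (T k) = u k * T k by rewrite /u -mulrA TiT mulr1.
have sgT k x : sg k x * T k = T k * x by rewrite /sg -mulrA TiT mulr1.
have Ed a b : d (T a * T b) = (u a + sg a (u b)) * (T a * T b).
  rewrite M !dT mulrDl -mulrA; congr (_ + _).
  by rewrite mulrA -sgT -mulrA.
have coc i j : u j + sg j (u i) = u i + sg i (u j).
  have h := congr1 d (Trel i j); rewrite (dlinZ L) !Ed Trel -scalerAr in h.
  move/(scalerI (qnz i j)): h => h.
  have inv : (T i * T j) * (Ti j * Ti i) = 1.
    by rewrite -mulrA (mulrA (T j)) TTi mul1r TTi.
  by have := congr1 (fun v => v * (Ti j * Ti i)) h; rewrite /= -!(mulrA (_ + _)) inv !mulr1.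
have coc_cf i j p : (lam j p - 1) * cf p (u i) = (lam i p - 1) * cf p (u j).
  have := congr1 (cf p) (coc i j); rewrite !cfD !cf_sg => h.
  apply/eqP; rewrite -subr_eq0; apply/eqP.
  transitivity ((cf p (u j) + lam j p * cf p (u i)) - (cf p (u i) + lam i p * cf p (u j))).
    by ring.
  by rewrite h subrr.
pose U := undup (flatten [seq rs spanR (u k) | k <- enum 'I_n]).
have UU : uniq U := undup_uniq _.
have inU k p : p \in rs spanR (u k) -> p \in U.
  move=> h; rewrite mem_undup; apply/flatten_mapP; exists k => //.
  by rewrite mem_enum.
pose rho p := if [pick k | lam k p != 1] is Some k then cf p (u k) / (1 - lam k p) else 0.
pose r := \sum_(p <- U) rho p *: mono p.
pose z k := \sum_(p <- U) (if p.1 == 0 then cf p (u k) else 0) *: mono p.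
have ud k : u k = (r - sg k r) + z k.
  apply: cf_ext => p.
  rewrite cfD cfB cf_sg /r /z !cf_uniq //.
  case: (boolP (p \in U)) => pU; last first.
    rewrite cf_out; first by rewrite mulr0 !subr0 addr0.
    by apply: contra pU; exact: inU.
  case: (eqVneq p.1 0) => [p10|p10].
    have l1 : lam k p = 1 by case: p p10 {pU} => a b /= ->; apply: lam0.
    by rewrite l1 mul1r subrr add0r.
  rewrite addr0 /rho; case: pickP => [k' lk'|none].
    have na : 1 - lam k' p != 0 by rewrite subr_eq0 eq_sym.
    have E : cf p (u k) = (1 - lam k p) * cf p (u k') / (1 - lam k' p).
      apply: (mulIf na); rewrite mulfVK //.
      by rewrite -[1 - lam k' p]opprB mulrN mulrC coc_cf -mulNr opprB.
    by rewrite E; ring.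
  exfalso; move/eqP: p10; apply; apply: tm_central => // k0.
  by have := none k0; rewrite /= => /negbFE/eqP l1; rewrite T_tm_lam l1 scale1r.
have zc k : central (z k).
  apply: central_sum => p; case: eqP => [E|_]; last by rewrite scale0r; apply: central0.
  by apply: central_scale; case: p E => a b /= ->; exact: mono0_c.
have wc j : central (w j) by exact: Xd_central.
exists r, z, w; split => //; split => // x.
have He : is_derivation (fun x => d x + - combo r z w x).
  by apply: der_add => //; apply: der_opp; apply: combo_der.
have := der_zero_gen He.
have H1 : forall k, d (T k) + - combo r z w (T k) = 0.
  move=> k /=; rewrite sumD_T sumP_T addr0 dT ud mulrDl mulrBl sgT.
  by rewrite subrr.
have H2 : forall j, d (X j) + - combo r z w (X j) = 0.
  move=> j /=; rewrite sumD_X sumP_X addr0 (Xc j r) subrr add0r.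
  by rewrite subrr.
move=> /(_ H1 H2 x) /eqP; rewrite addr_eq0 opprK => /eqP.
by [].
Qed.

Lemma uniq_decomp r (z : 'I_n -> R) (w : 'I_m -> R) :
  (forall i, central (z i)) -> (forall j, central (w j)) ->
  (forall x, (r * x - x * r) + \sum_(i < n) z i * D i x
                             + \sum_(j < m) w j * P j x = 0) ->
  (forall x, r * x - x * r = 0) /\ (forall i x, z i * D i x = 0) /\
  (forall j x, w j * P j x = 0).
Proof.
move=> zc wc H.
have w0 j : w j = 0.
  by have := H (X j); rewrite sumD_X sumP_X (Xc j r) subrr !add0r.
have zT k : z k = 0 /\ T k * r = r * T k.
  have h := H (T k); rewrite sumD_T sumP_T addr0 in h.
  have h2 : (r - sg k r) + z k = 0.
    have := congr1 (fun v => v * Ti k) h.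
    by rewrite mul0r mulrDl mulrBl /sg -!mulrA TTi !mulr1.
  have cz p : cf p (z k) = 0.
    case: (eqVneq (cf p (z k)) 0) => // cn.
    have p10 := central_cf Hs (zc k) cn.
    have l1 : lam k p = 1 by case: p p10 {cn} => a b /= ->; apply: lam0.
    by have := congr1 (cf p) h2; rewrite cfD cfB cf_sg l1 mul1r subrr add0r cf0.
  have z0 : z k = 0 by apply: cf_ext => p; rewrite cz cf0.
  split => //.
  move: h2; rewrite z0 addr0 => /eqP; rewrite subr_eq0 => /eqP E.
  by rewrite {2}E /sg -!mulrA TiT mulr1.
have rc := comm_all (fun k => (zT k).2).
split; first by move=> x; rewrite rc subrr.
by split => [i x|j x]; rewrite ?(zT i).1 ?w0 mul0r.
Qed.
End Decomp.

End Main.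


Theorem corollary2p2 (K : fieldType) (R : algType K) (n m : nat)
  (q : 'I_n -> 'I_n -> K) (T Ti : 'I_n -> R) (X : 'I_m -> R) :
  [pchar K] =i pred0 ->
  qtorus_poly q T Ti X ->
  simple_sub (in_span (tmono T Ti)) ->
  (* (a) Z(R) = K[X_1, ..., X_m] *)
  (forall r : R, central r <-> in_span (xmono X) r) /\
  (* (b) the derivations D_i, partial_j exist, and
     Der(R) = InnDer(R) (+) (+)_i Z(R) D_i (+) (+)_j Z(R) partial_j *)
  ((exists D P, is_Dfamily T X D /\ is_Pfamily T X P) /\
   forall (D : 'I_n -> R -> R) (P : 'I_m -> R -> R),
     is_Dfamily T X D -> is_Pfamily T X P ->
     (forall d : R -> R, is_derivation d <->
        exists (r : R) (z : 'I_n -> R) (w : 'I_m -> R),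
          (forall i, central (z i)) /\ (forall j, central (w j)) /\
          forall x, d x = (r * x - x * r) + \sum_(i < n) z i * D i x
                                          + \sum_(j < m) w j * P j x) /\
     (forall (r : R) (z : 'I_n -> R) (w : 'I_m -> R),
          (forall i, central (z i)) -> (forall j, central (w j)) ->
          (forall x, (r * x - x * r) + \sum_(i < n) z i * D i x
                                     + \sum_(j < m) w j * P j x = 0) ->
          (forall x, r * x - x * r = 0) /\
          (forall i x, z i * D i x = 0) /\
          (forall j x, w j * P j x = 0))).
Proof.
move=> _ HQ Hs.
split.
  move=> r; split; first exact: (central_span HQ Hs).
  exact: (span_central HQ).
split.
  by exists (Dd HQ), (Pd HQ); exact: (DP_family HQ).
move=> D P HD HP; split.
  move=> d; split; first exact: (decomp HQ Hs HD HP).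
  move=> [r [z [w [zc [wc E]]]]].
  apply: (der_ext _ (combo_der r HD HP zc wc)) => x.
  by rewrite E.
exact: (uniq_decomp HQ Hs HD HP).
Qed.
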